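(* There exist $\alpha>0$, $\gamma\in(0,1]$, integers $m\ge1$, $k\ge2$, a set $\mathcal{X}$, a class $\mathcal{H}$ of functions $\mathcal{X}\to\{0,1\}$, $\bar{x}\in\mathcal{X}^k$, a panel $\bar{j}=\bar{j}^{\alpha,\gamma}_{j^1,\dots,j^m}$ and $\pi\in\Delta\mathcal{H}$ such that simultaneously (1) $\mathbb{E}_{h\sim\pi}[Unfair^{\alpha,\gamma}(h,\bar{x},\bar{j})]=1$, and (2) $Unfair^{\alpha,\gamma}(\pi,\bar{x},\bar{j})=0$.
   Context: $\Delta\mathcal{H}$ is the set of distributions over $\mathcal{H}$, $\pi(x):=\Pr_{h\sim\pi}[h(x)=1]$, and a hypothesis $h$ is identified with the point mass on $h$. An auditor $j$ has $d^j:\mathcal{X}^2\to[0,1]$ (nonnegative, symmetric); $\pi$ has an $\alpha$-violation on $(x,x')$ w.r.t. $j$ if $\pi(x)-\pi(x')>d^j(x,x')+\alpha$. The panel $\bar{j}^{\alpha,\gamma}_{j^1,\dots,j^m}$ maps $(\pi,\bar{x})$, $\bar{x}\in\mathcal{X}^k$, to some pair $(\bar{x}^s,\bar{x}^l)$ with $s\ne l$ on which at least $\lceil\gamma m\rceil$ of the auditors detect an $\alpha$-violation of $\pi$, if such a pair exists, and to $(v,v)$ for a fixed default $v\in\mathcal{X}$ otherwise. $Unfair^{\alpha,\gamma}(\pi,\bar{x},\bar{j})=1$ if the panel outputs a pair with $s\ne l$, and $0$ otherwise. *)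

(* Defs.v *)
From mathcomp Require Import all_boot all_order all_algebra.
From mathcomp Require Import reals.
Set Implicit Arguments. Unset Strict Implicit. Unset Printing Implicit Defensive.
Import Order.TTheory GRing.Theory Num.Theory.
Local Open Scope ring_scope.

Section Fairness.
Variables (R : realType) (X : finType).

Definition hyp := {ffun X -> bool}.

Definition is_dist (H : {set hyp}) (pi : {ffun hyp -> R}) : Prop :=
  (forall h, 0 <= pi h) /\ (forall h, h \notin H -> pi h = 0) /\
  \sum_(h in H) pi h = 1.

(* pi(x) := Pr_{h ~ pi}[h(x) = 1] *)
Definition prob1 (H : {set hyp}) (pi : {ffun hyp -> R}) (x : X) : R :=
  \sum_(h in H) pi h * (h x)%:R.

(* h identified with the point mass on h *)
Definition point_prob (h : hyp) (x : X) : R := (h x)%:R.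

Definition auditors (m : nat) (d : 'I_m -> X -> X -> R) : Prop :=
  forall j x x', 0 <= d j x x' <= 1 /\ d j x x' = d j x' x.

Definition violation (alpha : R) (m : nat) (d : 'I_m -> X -> X -> R)
  (p : X -> R) (j : 'I_m) (x x' : X) : bool :=
  p x - p x' > d j x x' + alpha.

Definition panel_ok (alpha gamma : R) (m : nat) (d : 'I_m -> X -> X -> R)
  (p : X -> R) (k : nat) (xbar : 'I_k -> X) (sl : 'I_k * 'I_k) : bool :=
  (sl.1 != sl.2) &&
  (Num.ceil (gamma * m%:R) <=
     (#|[set j : 'I_m | violation alpha d p j (xbar sl.1) (xbar sl.2)]|)%:Z).

Definition panel_pick (alpha gamma : R) (m : nat) (d : 'I_m -> X -> X -> R)
  (p : X -> R) (k : nat) (xbar : 'I_k -> X) : option ('I_k * 'I_k) :=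
  [pick sl | panel_ok alpha gamma d p xbar sl].

Definition panel (v : X) (alpha gamma : R) (m : nat) (d : 'I_m -> X -> X -> R)
  (p : X -> R) (k : nat) (xbar : 'I_k -> X) : X * X :=
  match panel_pick alpha gamma d p xbar with
  | Some sl => (xbar sl.1, xbar sl.2)
  | None => (v, v)
  end.

Definition Unfair (alpha gamma : R) (m : nat) (d : 'I_m -> X -> X -> R)
  (p : X -> R) (k : nat) (xbar : 'I_k -> X) : nat :=
  if panel_pick alpha gamma d p xbar is Some _ then 1%N else 0%N.

End Fairness.

(* Main.v *)
Require Import Defs.
From mathcomp Require Import all_boot all_order all_algebra.
From mathcomp Require Import reals.
Import Order.TTheory GRing.Theory Num.Theory.
Local Open Scope ring_scope.

Theorem lemma5 (R : realType) :
  exists (alpha gamma : R) (m k : nat) (X : finType) (H : {set hyp X})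
         (xbar : 'I_k -> X) (d : 'I_m -> X -> X -> R) (pi : {ffun hyp X -> R}),
    0 < alpha /\ 0 < gamma <= 1 /\ (1 <= m)%N /\ (2 <= k)%N /\
    auditors d /\ is_dist H pi /\
    \sum_(h in H) pi h * (Unfair alpha gamma d (point_prob R h) xbar)%:R = 1 /\
    Unfair alpha gamma d (prob1 H pi) xbar = 0%N.
Proof.
pose h1 : hyp bool := [ffun x : bool => x].
pose h2 : hyp bool := [ffun x : bool => ~~ x].
have h12 : h1 != h2 by apply/eqP => /ffunP /(_ true); rewrite !ffunE.
pose H := h1 |: [set h2].
pose pi : {ffun hyp bool -> R} := [ffun h => if h \in H then 2^-1 else 0].
pose xbar : 'I_2 -> bool := fun i => val i == 1%N.
pose d : 'I_1 -> bool -> bool -> R := fun _ _ _ => 0.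
have c1 : Num.ceil ((1:R) * 1%:R) = 1.
  by rewrite mul1r ceil1.
have sumH : forall F : hyp bool -> R, \sum_(h in H) F h = F h1 + F h2.
  by move=> F; rewrite big_setU1 ?inE //= big_set1.
have piH1 : pi h1 = 2^-1 by rewrite ffunE !inE eqxx.
have piH2 : pi h2 = 2^-1 by rewrite ffunE !inE eqxx orbT.
have o1 : (1 < 2)%N by [].
have U : forall h, h \in H -> Unfair 2^-1 1 d (point_prob R h) xbar = 1%N.
  move=> h; rewrite !inE => /orP [] /eqP ->; rewrite /Unfair /panel_pick.
    case: pickP => // /(_ (Ordinal o1, ord0)); rewrite /panel_ok /= c1.
    have -> : [set j : 'I_1 | violation 2^-1 d (point_prob R h1) j (xbar (Ordinal o1)) (xbar ord0)] = setT.
      apply/setP => j; rewrite !inE /violation /d /point_prob /xbar /= !ffunE /=.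
      by rewrite subr0 add0r invf_lt1 ?ltr1n.
    by rewrite cardsT card_ord.
  case: pickP => // /(_ (ord0, Ordinal o1)); rewrite /panel_ok /= c1.
  have -> : [set j : 'I_1 | violation 2^-1 d (point_prob R h2) j (xbar ord0) (xbar (Ordinal o1))] = setT.
    apply/setP => j; rewrite !inE /violation /d /point_prob /xbar /= !ffunE /=.
    by rewrite subr0 add0r invf_lt1 ?ltr1n.
  by rewrite cardsT card_ord.
have P : forall x, prob1 H pi x = 2^-1.
  move=> x; rewrite /prob1 sumH piH1 piH2 !ffunE -mulrDr.
  by case: x => /=; rewrite ?addr0 ?add0r mulr1.
exists 2^-1, 1, 1%N, 2%N, bool, H, xbar, d, pi.
split; first by rewrite invr_gt0 ltr0n.
split; first by rewrite ltr01 lexx.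
do 2 split => //.
split; first by move=> j x x'; rewrite /d lexx ler01.
split.
  split; first by move=> h; rewrite ffunE; case: ifP; rewrite ?invr_ge0 ?ler0n.
  split; first by move=> h /negbTE hH; rewrite ffunE hH.
  by rewrite sumH piH1 piH2 [RHS](splitr 1) mul1r.
split.
  rewrite sumH !U ?inE ?eqxx ?orbT // piH1 piH2 mulr1.
  by rewrite [RHS](splitr 1) mul1r.
rewrite /Unfair /panel_pick; case: pickP => // sl; rewrite /panel_ok c1.
have -> : [set j : 'I_1 | violation 2^-1 d (prob1 H pi) j (xbar sl.1) (xbar sl.2)] = set0.
  apply/setP => j; rewrite !inE /violation /d !P subrr add0r.
  by rewrite ltNge invr_ge0 ler0n.
by rewrite cards0 andbF.
Qed.
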